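(* Let $k$ be an algebraically closed field, $\ell$ a non-trivial extension field of $k$, and $V,W$ be $k$-vector spaces. Suppose there exist $k$-linear maps $f,g\colon V\to W$ such that for every pair of scalars $\lambda,\mu\in\ell$, not both zero, the map $\operatorname{Hom}_k(\lambda,f)+\operatorname{Hom}_k(\mu,g)\colon\operatorname{Hom}_k(\ell,V)\to\operatorname{Hom}_k(\ell,W)$ is an isomorphism. Then $V=0=W$.
   Context: Here $\lambda$ and $\mu$ denote the $k$-linear maps $\ell\to\ell$ given by multiplication by $\lambda$ and $\mu$, so $\operatorname{Hom}_k(\lambda,f)$ sends $h\colon\ell\to V$ to $f\circ h\circ(\lambda\cdot-)$. *)

(* Defs.v *)
From HB Require Import structures.
From mathcomp Require Import all_boot all_algebra.
Set Implicit Arguments. Unset Strict Implicit. Unset Printing Implicit Defensive.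
Import GRing.Theory.
Local Open Scope ring_scope.

(* An extension field L of k is given by a (necessarily injective) ring
   morphism iota : k -> L; L is a k-vector space via a *: x := iota a * x. *)

Definition klinear (k : fieldType) (L : fieldType) (iota : {rmorphism k -> L})
  (V : lmodType k) (h : L -> V) : Prop :=
  (forall x y : L, h (x + y) = h x + h y) /\
  (forall (a : k) (x : L), h (iota a * x) = a *: h x).

(* Hom_k(lambda, f) + Hom_k(mu, g) applied to h : h |-> f o h o (lambda * -)
   + g o h o (mu * -). *)
Definition homPair (k : fieldType) (L : fieldType) (V W : lmodType k)
  (lam mu : L) (f g : V -> W) (h : L -> V) : L -> W :=
  fun x => f (h (lam * x)) + g (h (mu * x)).

(* The map is an isomorphism Hom_k(L,V) -> Hom_k(L,W): it is (automatically
   k-linear and) bijective between these spaces of k-linear maps. *)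
Definition homPair_iso (k : fieldType) (L : fieldType) (iota : {rmorphism k -> L})
  (V W : lmodType k) (lam mu : L) (f g : V -> W) : Prop :=
  (forall h1 h2 : L -> V, klinear iota h1 -> klinear iota h2 ->
     homPair lam mu f g h1 =1 homPair lam mu f g h2 -> h1 =1 h2) /\
  (forall h' : L -> W, klinear iota h' ->
     exists h : L -> V, klinear iota h /\ homPair lam mu f g h =1 h').

(* Main.v *)
Require Import Defs.
From HB Require Import structures.
From mathcomp Require Import all_boot all_algebra.
From mathcomp Require Import boolp classical_sets ring.
Import GRing.Theory.
Local Open Scope ring_scope.
Set Implicit Arguments. Unset Strict Implicit. Unset Printing Implicit Defensive.

Definition choose_or {A B : Type} (P : A -> Prop) (f : A -> B) (b : B) : B :=
  match pselect (exists a, P a) with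
  | left H => f (proj1_sig (cid H))
  | right _ => b end.

Lemma choose_orE {A B : Type} (P : A -> Prop) (f : A -> B) (b : B) (a : A) :
  P a -> (forall a1 a2, P a1 -> P a2 -> f a1 = f a2) -> choose_or P f b = f a.
Proof.
move=> Pa Hf; rewrite /choose_or; case: pselect => [H|H]; last by case: H; exists a.
by case: (cid H) => /= a' Pa'; apply: Hf.
Qed.

Section Poly.
Variables (k : closedFieldType) (L : fieldType) (iota : {rmorphism k -> L}) (m : L).
Hypothesis Hm : forall a : k, iota a != m.

Definition P (p : {poly k}) : L := (map_poly iota p).[m].

Lemma P_add p q : P (p + q) = P p + P q.
Proof. by rewrite /P rmorphD hornerD. Qed.
Lemma P_scal a p : P (a *: p) = iota a * P p.
Proof. by rewrite /P map_polyZ hornerZ. Qed.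
Lemma P_X p : P ('X * p) = m * P p.
Proof. by rewrite /P rmorphM /= map_polyX hornerM hornerX. Qed.
Lemma P_1 : P 1 = 1.
Proof. by rewrite /P rmorph1 hornerC. Qed.

Lemma P_factor p : p != 0 -> exists c (s : seq k), c != 0 /\
   P p = iota c * \prod_(z <- s) (m - iota z).
Proof.
move=> p0; case: (closed_field_poly_normal p) => s Hs.
exists (lead_coef p), s; split; first by rewrite lead_coef_eq0.
rewrite {1}Hs P_scal; congr (_ * _).
rewrite /P rmorph_prod horner_prod; apply: eq_bigr => z _.
rewrite /=. idtac. by rewrite map_polyXsubC hornerXsubC.
Qed.

Lemma prod_neq0 (s : seq k) : \prod_(z <- s) (m - iota z) != 0.
Proof.
elim: s => [|z s IH]; first by rewrite big_nil oner_neq0.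
by rewrite big_cons mulf_neq0 // subr_eq0 eq_sym Hm.
Qed.

Lemma P_inj p : P p = 0 -> p = 0.
Proof.
move=> H; apply/eqP; apply: contraT => p0.
case: (@P_factor p p0) => c [s [c0 E]].
by move: H; rewrite E => /eqP; rewrite mulf_eq0 fmorph_eq0 (negbTE c0) /= (negbTE (prod_neq0 s)).
Qed.

End Poly.
Section Ext.
Variables (k : closedFieldType) (L : fieldType) (iota : {rmorphism k -> L}).
Variables (X Y : lmodType k) (F G : {linear X -> Y}).
Variable m : L.
Hypothesis Hm : forall a : k, iota a != m.
Variable e : nat -> X.
Hypothesis He : forall n, F (e n) = G (e n.+1).
Hypothesis Hsurj : forall (u : X) (c : k), exists w, F w - c *: G w = G u.

Local Notation Pm := (P iota m).

Definition valid (D : L -> Prop) (h : L -> X) :=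
 [/\ D 1, h 1 = e 0,
  (forall y z, D y -> D z -> D (y + z) /\ h (y + z) = h y + h z),
  (forall a y, D y -> D (iota a * y) /\ h (iota a * y) = a *: h y)
  & (forall y, D y -> D (m * y) /\ F (h y) = G (h (m * y)))].

Definition obj := {p : (L -> Prop) * (L -> X) | valid p.1 p.2}.
Definition dom (t : obj) := (proj1_sig t).1.
Definition fn (t : obj) := (proj1_sig t).2.
Definition Rle (s t : obj) := forall y, dom s y -> dom t y /\ fn t y = fn s y.
Definition Rb (s t : obj) : bool := `[< Rle s t >].

Lemma P_sub p q : Pm (p - q) = Pm p - Pm q.
Proof. by rewrite /P rmorphB hornerD hornerN. Qed.

Definition E (p : {poly k}) : X := \sum_(i < size p) p`_i *: e i.

Lemma E_wide (p : {poly k}) n : (size p <= n)%N -> E p = \sum_(i < n) p`_i *: e i.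
Proof.
move=> H; rewrite /E (big_ord_widen n (fun i => p`_i *: e i) H) big_mkcond.
apply: eq_bigr => i _; case: ifP => // /negbT; rewrite -leqNgt => Hi.
by rewrite nth_default // scale0r.
Qed.

Lemma E_add (p q : {poly k}) : E (p + q) = E p + E q.
Proof.
have H1 : (size p <= size p + size q)%N by apply: leq_addr.
have H2 : (size q <= size p + size q)%N by apply: leq_addl.
have H3 : (size (p + q)%R <= size p + size q)%N.
  by apply: leq_trans (size_polyD _ _) _; rewrite geq_max H1 H2.
rewrite (E_wide H1) (E_wide H2) (E_wide H3) -big_split; apply: eq_bigr => i _.
by rewrite coefD scalerDl.
Qed.

Lemma E_scal a (p : {poly k}) : E (a *: p) = a *: E p.
Proof.
rewrite (E_wide (size_scale_leq a p)) /E scaler_sumr; apply: eq_bigr => i _.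
by rewrite coefZ scalerA.
Qed.

Lemma E_1 : E 1 = e 0.
Proof. by rewrite /E size_poly1 big_ord1 coef1 /= scale1r. Qed.

Lemma E_X (p : {poly k}) : E ('X * p) = \sum_(i < size p) p`_i *: e i.+1.
Proof.
have H : (size ('X * p)%R <= (size p).+1)%N.
  apply: leq_trans (size_polyMleq _ _) _; rewrite size_polyX /=.
  by case: (size p).
rewrite (E_wide H) big_ord_recl coefXM /= scale0r add0r.
by apply: eq_bigr => i _; rewrite coefXM /=.
Qed.

Lemma E_rel (p : {poly k}) : F (E p) = G (E ('X * p)).
Proof.
rewrite E_X /E !linear_sum; apply: eq_bigr => i _.
by rewrite !linearZ /= He.
Qed.

Lemma Pm_inj (p q : {poly k}) : Pm p = Pm q -> p = q.
Proof.
move=> H; apply/eqP; rewrite -subr_eq0; apply/eqP; apply: (P_inj Hm).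
by rewrite P_sub H subrr.
Qed.

Definition D0 (y : L) := exists p, y = Pm p.
Definition h0 (y : L) := choose_or (fun p => y = Pm p) E 0.

Lemma h0E (p : {poly k}) : h0 (Pm p) = E p.
Proof.
apply: choose_orE => // p1 p2 H1 H2.
by rewrite (Pm_inj (esym H1)) (Pm_inj (esym H2)).
Qed.

Lemma valid0 : valid D0 h0.
Proof.
split.
- by exists 1; rewrite P_1.
- by rewrite -(P_1 iota m) h0E E_1.
- move=> _ _ [p ->] [q ->]; split; first by exists (p + q); rewrite P_add.
  by rewrite -P_add !h0E E_add.
- move=> a _ [p ->]; split; first by exists (a *: p); rewrite P_scal.
  by rewrite -P_scal !h0E E_scal.
- move=> _ [p ->]; split; first by exists ('X * p); rewrite P_X.
  by rewrite -P_X !h0E E_rel.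
Qed.

Definition t0 : obj := exist _ (D0, h0) valid0.


Lemma Rb_refl t : Rb t t.
Proof. by apply/asboolP => y Dy. Qed.

Lemma Rb_trans r s t : Rb r s -> Rb s t -> Rb r t.
Proof.
move=> /asboolP H1 /asboolP H2; apply/asboolP => y Dy.
case: (H1 y Dy) => Dy' E1; case: (H2 y Dy') => Dy'' E2.
by split => //; rewrite E2 E1.
Qed.

Section Chain.
Variable A : set obj.
Hypothesis Atot : total_on A (fun x y => Rb x y).

Definition Du (y : L) := exists t, A t /\ dom t y.
Definition hu (y : L) := choose_or (fun t => A t /\ dom t y) (fun t => fn t y) 0.

Lemma huE t y : A t -> dom t y -> hu y = fn t y.
Proof.
move=> At Dt; apply: (@choose_orE _ _ (fun t => A t /\ dom t y) (fun t => fn t y) 0 t) => //.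
move=> t1 t2 [A1 D1] [A2 D2].
case: (Atot A1 A2) => /asboolP H.
- by case: (H y D1).
- by case: (H y D2).
Qed.

Lemma common t1 t2 : A t1 -> A t2 -> exists t, [/\ A t, Rle t1 t & Rle t2 t].
Proof.
move=> A1 A2; case: (Atot A1 A2) => /asboolP H.
- exists t2; split => //; by move/asboolP: (Rb_refl t2).
- exists t1; split => //; by move/asboolP: (Rb_refl t1).
Qed.

Lemma valid_u t1 : A t1 -> valid Du hu.
Proof.
move=> A1.
have [D11 h11 Dadd Dsc Dm] : valid (dom t1) (fn t1) := proj2_sig t1.
split.
- by exists t1.
- by rewrite (huE A1 D11).
- move=> y z [ty [Ay Dy]] [tz [Az Dz]].
  case: (common Ay Az) => t [At Hy Hz].
  case: (Hy y Dy) => Dty _; case: (Hz z Dz) => Dtz _.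
  have [_ _ Dadd' _ _] : valid (dom t) (fn t) := proj2_sig t.
  case: (Dadd' y z Dty Dtz) => Dyz Eyz.
  split; first by exists t.
  by rewrite (huE At Dyz) (huE At Dty) (huE At Dtz).
- move=> a y [t [At Dty]].
  have [_ _ _ Dsc' _] : valid (dom t) (fn t) := proj2_sig t.
  case: (Dsc' a y Dty) => D' E'.
  split; first by exists t.
  by rewrite (huE At D') (huE At Dty).
- move=> y [t [At Dty]].
  have [_ _ _ _ Dm'] : valid (dom t) (fn t) := proj2_sig t.
  case: (Dm' y Dty) => D' E'.
  split; first by exists t.
  by rewrite (huE At D') (huE At Dty).
Qed.

Lemma chain_bound : exists u, forall s, A s -> Rb s u.
Proof.
case: (pselect (exists t, A t)) => [[t1 A1]|NA]; last first.
  by exists t0 => s As; case: NA; exists s.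
exists (exist _ (Du, hu) (valid_u A1)) => s As; apply/asboolP => y Dy.
split; first by exists s.
by rewrite /fn /= (huE As Dy).
Qed.

End Chain.


Section Max.
Variable t : obj.
Hypothesis tmax : premaximal (fun x y => Rb x y) t.
Local Notation D := (dom t).
Local Notation h := (fn t).

Lemma vt : valid D h.
Proof. exact: (proj2_sig t). Qed.

Lemma D_add y z : D y -> D z -> D (y + z).
Proof. by case: vt => _ _ H _ _ Hy Hz; case: (H y z Hy Hz). Qed.
Lemma D_sc a y : D y -> D (iota a * y).
Proof. by case: vt => _ _ _ H _ Hy; case: (H a y Hy). Qed.
Lemma D_m y : D y -> D (m * y).
Proof. by case: vt => _ _ _ _ H Hy; case: (H y Hy). Qed.
Lemma D_1 : D 1.
Proof. by case: vt. Qed.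
Lemma D_0 : D 0.
Proof. by rewrite -(mul0r 1) -(rmorph0 iota); apply: D_sc; apply: D_1. Qed.
Lemma D_sub y z : D y -> D z -> D (y - z).
Proof.
move=> Hy Hz; apply: D_add => //.
by rewrite -mulN1r -(rmorphN1 iota); apply: D_sc.
Qed.
Lemma D_unsc a y : a != 0 -> D (iota a * y) -> D y.
Proof.
move=> a0 H; have := D_sc a^-1 H.
by rewrite mulrA -rmorphM mulVf // rmorph1 mul1r.
Qed.

Lemma mc0 c : m - iota c != 0.
Proof. by rewrite subr_eq0 eq_sym Hm. Qed.

Lemma D_div y c : D y -> D (y / (m - iota c)).
Proof.
move=> Dy; set z := y / (m - iota c).
case: (pselect (D z)) => // Nz.
have [w Hw] := Hsurj (h y) c.
have mz : m * z = y + iota c * z.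
  by rewrite /z; field; apply: mc0.
pose Q (u : L) (p : L * k) := D p.1 /\ u = p.1 + iota p.2 * z.
pose D' u := exists p, Q u p.
pose h' u := choose_or (Q u) (fun p => h p.1 + p.2 *: w) 0.
have uniq d1 a1 d2 a2 : D d1 -> D d2 -> d1 + iota a1 * z = d2 + iota a2 * z ->
    a1 = a2 /\ d1 = d2.
  move=> D1 D2 E.
  have aE : a1 = a2.
    apply/eqP; apply: contraT => ne; case: Nz.
    have ne' : a1 - a2 != 0 by rewrite subr_eq0.
    apply: (D_unsc ne'); rewrite rmorphB mulrBl.
    have -> : iota a1 * z - iota a2 * z = d2 - d1.
      apply: (addIr (d1 + iota a2 * z)); transitivity (d1 + iota a1 * z); first ring.
      by rewrite E; ring.
    exact: D_sub.
  by split => //; move: E; rewrite aE => /addIr.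
have h'E d a : D d -> h' (d + iota a * z) = h d + a *: w.
  move=> Dd; apply: (@choose_orE _ _ (Q (d + iota a * z)) _ 0 (d, a)) => //.
  move=> [d1 a1] [d2 a2] [/= D1 E1] [/= D2 E2].
  by case: (uniq d1 a1 d2 a2 D1 D2 (etrans (esym E1) E2)) => -> ->.
have [V1 V2 Vadd Vsc Vm] := vt.
have v' : valid D' h'.
  split.
  - by exists (1, 0); split => //=; rewrite rmorph0 mul0r addr0.
  - have -> : (1 : L) = 1 + iota 0 * z by rewrite rmorph0 mul0r addr0.
    by rewrite h'E // scale0r addr0.
  - move=> _ _ [[d1 a1] [/= D1 ->]] [[d2 a2] [/= D2 ->]].
    have E : d1 + iota a1 * z + (d2 + iota a2 * z) = (d1 + d2) + iota (a1 + a2) * z.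
      by rewrite rmorphD; ring.
    case: (Vadd _ _ D1 D2) => D12 E12.
    rewrite E; split; first by exists (d1 + d2, a1 + a2).
    by rewrite !h'E // E12 scalerDl; rewrite addrACA.
  - move=> b _ [[d a] [/= Dd ->]].
    have E : iota b * (d + iota a * z) = iota b * d + iota (b * a) * z.
      by rewrite rmorphM; ring.
    case: (Vsc b _ Dd) => Db Eb.
    rewrite E; split; first by exists (iota b * d, b * a).
    by rewrite !h'E // Eb scalerDr scalerA.
  - move=> _ [[d a] [/= Dd ->]].
    have E : m * (d + iota a * z) = (m * d + iota a * y) + iota (a * c) * z.
      by rewrite mulrDr mulrCA mz rmorphM; ring.
    case: (Vm _ Dd) => Dmd Emd.
    case: (Vsc a _ Dy) => Day Eay.
    case: (Vadd _ _ Dmd Day) => Ds Es.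
    rewrite E; split; first by exists (m * d + iota a * y, a * c).
    rewrite !h'E // Es Eay !linearD !linearZ /= Emd -scalerA -addrA; congr (_ + _).
    rewrite -scalerDr; congr (_ *: _).
    by rewrite -Hw subrK.
have Hr : Rb t (exist _ (D', h') v').
  apply/asboolP => yy Dyy /=; split; first by exists (yy, 0); split => //=; rewrite rmorph0 mul0r addr0.
  have := h'E yy 0 Dyy; rewrite rmorph0 mul0r addr0 scale0r addr0.
  by rewrite /fn /=.
have /asboolP Hr' := tmax Hr.
have Dz' : D' z.
  by exists (0, 1); split => /=; [exact: D_0 | rewrite rmorph1 mul1r add0r].
by case: (Hr' z Dz') => Dz _; case: Nz.
Qed.


Lemma D_peel (s : seq k) y : D (\prod_(z <- s) (m - iota z) * y) -> D y.
Proof.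
elim: s y => [|c s IH] y; first by rewrite big_nil mul1r.
rewrite big_cons -mulrA => H; apply: IH.
by have := D_div c H; rewrite mulrAC mulfV ?mc0 // mul1r.
Qed.

Lemma D_poly p y : p != 0 -> D (Pm p * y) -> D y.
Proof.
move=> p0; case: (@P_factor _ _ iota m p p0) => c [s [c0 ->]]; rewrite -mulrA => H.
exact: D_peel (D_unsc c0 H).
Qed.

Lemma D_all y0 : D y0.
Proof.
case: (pselect (D y0)) => // Ny.
pose Q (u : L) (p : L * {poly k}) := D p.1 /\ u = p.1 + Pm p.2 * y0.
pose D' u := exists p, Q u p.
pose h' u := choose_or (Q u) (fun p => h p.1) 0.
have P0 : Pm 0 = 0 by rewrite /P rmorph0 horner0.
have uniq d1 p1 d2 p2 : D d1 -> D d2 -> d1 + Pm p1 * y0 = d2 + Pm p2 * y0 -> d1 = d2.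
  move=> D1 D2 E.
  have pE : p1 = p2.
    apply/eqP; apply: contraT => ne; case: Ny.
    have ne' : p1 - p2 != 0 by rewrite subr_eq0.
    apply: (D_poly ne'); rewrite P_sub mulrBl.
    have -> : Pm p1 * y0 - Pm p2 * y0 = d2 - d1.
      apply: (addIr (d1 + Pm p2 * y0)); transitivity (d1 + Pm p1 * y0); first ring.
      by rewrite E; ring.
    exact: D_sub.
  by move: E; rewrite pE => /addIr.
have h'E d p : D d -> h' (d + Pm p * y0) = h d.
  move=> Dd; apply: (@choose_orE _ _ (Q (d + Pm p * y0)) _ 0 (d, p)) => //.
  move=> [d1 a1] [d2 a2] [/= D1 E1] [/= D2 E2].
  by rewrite (uniq d1 a1 d2 a2 D1 D2 (etrans (esym E1) E2)).
have [V1 V2 Vadd Vsc Vm] := vt.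
have v' : valid D' h'.
  split.
  - by exists (1, 0); split => //=; rewrite P0 mul0r addr0.
  - have := h'E 1 0 V1; rewrite P0 mul0r addr0 => ->; exact: V2.
  - move=> _ _ [[d1 a1] [/= D1 ->]] [[d2 a2] [/= D2 ->]].
    have E : d1 + Pm a1 * y0 + (d2 + Pm a2 * y0) = (d1 + d2) + Pm (a1 + a2) * y0.
      by rewrite P_add; ring.
    case: (Vadd _ _ D1 D2) => D12 E12.
    rewrite E; split; first by exists (d1 + d2, a1 + a2).
    by rewrite !h'E.
  - move=> b _ [[d a] [/= Dd ->]].
    have E : iota b * (d + Pm a * y0) = iota b * d + Pm (b *: a) * y0.
      by rewrite P_scal; ring.
    case: (Vsc b _ Dd) => Db Eb.
    rewrite E; split; first by exists (iota b * d, b *: a).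
    by rewrite !h'E.
  - move=> _ [[d a] [/= Dd ->]].
    have E : m * (d + Pm a * y0) = m * d + Pm ('X * a) * y0.
      by rewrite P_X; ring.
    case: (Vm _ Dd) => Dmd Emd.
    rewrite E; split; first by exists (m * d, 'X * a).
    by rewrite !h'E.
have Hr : Rb t (exist _ (D', h') v').
  apply/asboolP => yy Dyy /=; split; first by exists (yy, 0); split => //=; rewrite P0 mul0r addr0.
  have := h'E yy 0 Dyy; rewrite P0 mul0r addr0.
  by rewrite /fn /=.
have /asboolP Hr' := tmax Hr.
have Dz' : D' y0.
  by exists (0, 1); split => /=; [exact: D_0 | rewrite P_1 mul1r add0r].
by case: (Hr' y0 Dz') => Dz _; case: Ny.
Qed.

End Max.

Lemma ext_exists : exists h : L -> X,
  [/\ (forall y z, h (y + z) = h y + h z),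
      (forall a y, h (iota a * y) = a *: h y),
      (forall y, F (h y) = G (h (m * y))) & h 1 = e 0].
Proof.
have [t tmax] := ZL_preorder t0 Rb_refl Rb_trans chain_bound.
have [V1 V2 Vadd Vsc Vm] := vt t.
exists (fn t); split => //.
- by move=> y z; case: (Vadd y z (D_all tmax y) (D_all tmax z)).
- by move=> a y; case: (Vsc a y (D_all tmax y)).
- by move=> y; case: (Vm y (D_all tmax y)).
Qed.

End Ext.

Lemma klin0 (k : fieldType) (L : fieldType) (iota : {rmorphism k -> L}) (V : lmodType k) :
  klinear iota (fun _ : L => (0 : V)).
Proof. by split => [x y|a x]; rewrite ?addr0 ?scaler0. Qed.

Lemma klin_phi (k : fieldType) (L : fieldType) (iota : {rmorphism k -> L}) (V : lmodType k)
  (phi : L -> k^o) (u : V) :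
  (forall y z, phi (y + z) = phi y + phi z) ->
  (forall a y, phi (iota a * y) = a *: phi y) ->
  klinear iota (fun y => phi y *: u).
Proof.
move=> H1 H2; split => [x y|a x]; first by rewrite H1 scalerDl.
by rewrite H2 scalerA.
Qed.

Theorem lemma4p1 (k : closedFieldType) (L : fieldType)
  (iota : {rmorphism k -> L}) (V W : lmodType k)
  (f g : {linear V -> W}) :
  (exists x : L, forall a : k, iota a != x) ->
  (forall lam mu : L, (lam != 0) || (mu != 0) ->
     homPair_iso iota lam mu f g) ->
  (forall v : V, v = 0) /\ (forall w : W, w = 0).
Proof.
move=> [x Hx] Hiso.
pose e0 (n : nat) : k^o := if n == 0%N then 1 else 0.
have He0 : forall n, (\0 : {linear k^o -> k^o}) (e0 n) = (\0 : {linear k^o -> k^o}) (e0 n.+1).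
  by [].
have Hs0 : forall (u : k^o) (c : k), exists w : k^o,
    (\0 : {linear k^o -> k^o}) w - c *: (\0 : {linear k^o -> k^o}) w = (\0 : {linear k^o -> k^o}) u.
  by move=> u c; exists 0; rewrite /= scaler0 subr0.
have [phi [phiD phiZ _ phi1]] := ext_exists Hx He0 Hs0.
have Lsurj : forall a b : k, (iota a != 0) || (iota b != 0) ->
    forall w, exists u, a *: f u + b *: g u = w.
  move=> a b Hab w; have [_ Hs] := Hiso _ _ Hab.
  have [h [[hD hZ] Hh]] := Hs _ (klin_phi w phiD phiZ).
  exists (h 1); have := Hh 1; rewrite /homPair !hZ !linearZ /=.
  by rewrite phi1 /e0 /= scale1r.
have Linj : forall a b : k, (iota a != 0) || (iota b != 0) ->
    forall u, a *: f u + b *: g u = 0 -> u = 0.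
  move=> a b Hab u Hu; have [Hi _] := Hiso _ _ Hab.
  have := Hi _ _ (klin_phi u phiD phiZ) (klin0 iota V).
  have H : homPair (iota a) (iota b) f g (fun y => phi y *: u) =1
           homPair (iota a) (iota b) f g (fun _ => 0).
    have phiZ' : forall a y, phi (iota a * y) = a * phi y := phiZ.
    move=> y; rewrite /homPair !linear0 addr0 !phiZ' ![_ * phi y]mulrC -!scalerA !linearZ /=.
    by rewrite -scalerDr Hu scaler0.
  by move=> /(_ H 1); rewrite phi1 /e0 /= scale1r.
have H01 : (iota 0 != 0) || (iota 1 != 0) by rewrite rmorph1 oner_neq0 orbT.
have H1c : forall c, (iota 1 != 0) || (iota c != 0) by move=> c; rewrite rmorph1 oner_neq0.
have Hs : forall (u : V) (c : k), exists w, f w - c *: g w = g u.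
  move=> u c; have [w Hw] := Lsurj 1 (- c) (H1c _) (g u).
  by exists w; rewrite -Hw scale1r scaleNr.
have gs : forall u : V, exists u', g u' = f u.
  move=> u; have [u' Hu'] := Lsurj 0 1 H01 (f u).
  by exists u'; rewrite -Hu' scale0r add0r scale1r.
pose s (u : V) : V := proj1_sig (cid (gs u)).
have sE : forall u, g (s u) = f u by move=> u; rewrite /s; case: (cid (gs u)).
have Vz : forall v : V, v = 0.
  move=> v.
  pose e (n : nat) : V := iter n s v.
  have He : forall n, f (e n) = g (e n.+1) by move=> n; rewrite /e /= sE.
  have [h [hD hZ hrel h1]] := ext_exists Hx He Hs.
  have hN : forall y, h (- y) = - h y.
    move=> y; apply/eqP; rewrite -subr_eq0 opprK -hD addNr.
    by have := hD 0 0; rewrite addr0 => /eqP; rewrite -subr_eq addrN => /eqP <-.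
  have Hx1 : ((1 : L) != 0) || (- x != 0) by rewrite oner_neq0.
  have [Hi _] := Hiso _ _ Hx1.
  have := Hi h _ (conj hD hZ) (klin0 iota V).
  have H : homPair 1 (- x) f g h =1 homPair 1 (- x) f g (fun _ => 0).
    move=> y; rewrite /homPair !linear0 addr0 mul1r mulNr hN linearN /= hrel.
    by rewrite subrr.
  by move=> /(_ H 1); rewrite h1.
split => // w.
have [u Hu] := Lsurj 0 1 H01 w.
by rewrite -Hu (Vz u) !linear0 addr0.
Qed.
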